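(* Let $\mathcal{M}=(W,\leq,R,V^+,V^-)$ be a Nelsonian conditional model and define $\mathcal{M}^i=(W^i,\leq^i,R^i,V^i)$ by: $W^i:=W\cup R$; $\leq^i:=\leq\cup\{((w,(X,Y),v),(w',(X,Y),v'))\mid w\leq w',\,v\leq v'\}$ (for triples in $R$); $R^i:=\{(w,X',(w,(X,Y),v)),((w,(X,Y),v),Y',v)\mid (w,(X,Y),v)\in R,\,X'\cap W=X,\,Y'\cap W=Y\}$; $V^i(p_i):=V^+(p_i)$ and $V^i(q_i):=V^-(p_i)$. Then (1) $\mathcal{M}^i$ is an extended conditional intuitionistic model, and (2) for every $w\in W$ and every $\phi\in\mathcal{L}_{\Box\!\!\rightarrow}$, $\mathcal{M},w\models^+\phi$ iff $\mathcal{M}^i,w\models^i E^\pm(\phi)$.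
   Context: $\mathcal{L}_{\Box\!\!\rightarrow}$ is built from variables $p_0,p_1,\dots$ with $\wedge,\vee,\to$, strong negation $\sim$, and a binary would-conditional $\Box\!\!\rightarrow$. A Nelsonian conditional model is $(W,\leq,R,V^+,V^-)$ with $W\neq\emptyset$, $\leq$ a preorder, $V^\pm$ assigning upward-closed sets to variables, $R\subseteq W\times(\mathcal{P}(W)\times\mathcal{P}(W))\times W$ satisfying for all $X,Y$: (c1) $w\leq w'$ and $R_{(X,Y)}(w,v)$ imply $R_{(X,Y)}(w',v')$ for some $v'\geq v$; (c2) $R_{(X,Y)}(w,v)$ and $v\leq v'$ imply $R_{(X,Y)}(w',v')$ for some $w'\geq w$. Verification $\models^+$/falsification $\models^-$: atoms by $V^\pm$; $\wedge$ verified iff both verified, falsified iff one falsified; $\vee$ dually; $\sim$ swaps; $w\models^+\psi\to\chi$ iff for all $v\geq w$, $v\models^+\psi$ implies $v\models^+\chi$; $w\models^-\psi\to\chi$ iff $w\models^+\psi$ and $w\models^-\chi$; $w\models^+\psi\Box\!\!\rightarrow\chi$ iff for all $v\geq w$ and $u$ with $R_{\|\psi\|}(v,u)$, $u\models^+\chi$; $w\models^-\psi\Box\!\!\rightarrow\chi$ iff some $u$ has $R_{\|\psi\|}(w,u)$ and $u\models^-\chi$; $\|\psi\|=(\{w\mid w\models^+\psi\},\{w\mid w\models^-\psi\})$. The target language $\mathcal{L}^{e+}_{(\Box\!\!\rightarrow,\Diamond\!\!\rightarrow)}$ has variables $p_i$ and extra variables $q_i$, connectives $\wedge,\vee,\to$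 and primitive binary $\Box\!\!\rightarrow$, $\Diamond\!\!\rightarrow$ (no negation). An extended conditional intuitionistic model is $(W,\leq,R,V)$ with $\leq$ a preorder, $V$ assigning upward-closed sets to all $p_i,q_i$, $R\subseteq W\times\mathcal{P}(W)\times W$ such that for all $X$: if $w\leq w'$ and $R_X(w,v)$ then $R_X(w',v')$ for some $v'\geq v$; if $R_X(w,v)$ and $v\leq v'$ then $R_X(w',v')$ for some $w'\geq w$. $\models^i$: atoms by $V$; $\wedge,\vee$ classical at a point; $w\models^i\psi\to\chi$ iff for all $v\geq w$, $v\models^i\psi$ implies $v\models^i\chi$; $w\models^i\psi\Box\!\!\rightarrow\chi$ iff for all $v\geq w$ and $u$ with $R_{\|\psi\|^i}(v,u)$, $u\models^i\chi$; $w\models^i\psi\Diamond\!\!\rightarrow\chi$ iff some $u$ has $R_{\|\psi\|^i}(w,u)$ and $u\models^i\chi$; $\|\psi\|^i=\{w\mid w\models^i\psi\}$. The translation $E^\pm$: $E^\pm(p_i)=p_i$, $E^\pm(\sim p_i)=q_i$, $E^\pm(\phi\wedge\psi)=E^\pm(\phi)\wedge E^\pm(\psi)$, $E^\pm(\sim(\phi\wedge\psi))=E^\pm(\sim\phi)\vee E^\pm(\sim\psi)$, $E^\pm(\phi\vee\psi)=E^\pm(\phi)\vee E^\pm(\psi)$, $E^\pm(\sim(\phi\vee\psi))=E^\pm(\sim\phi)\wedge E^\pm(\sim\psi)$, $E^\pm(\sim\sim\phi)=E^\pm(\phi)$, $E^\pm(\phi\to\psi)=E^\pm(\phi)\to E^\pm(\psi)$,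 $E^\pm(\sim(\phi\to\psi))=E^\pm(\phi)\wedge E^\pm(\sim\psi)$, $E^\pm(\phi\Box\!\!\rightarrow\psi)=E^\pm(\phi)\Box\!\!\rightarrow(E^\pm(\sim\phi)\Box\!\!\rightarrow E^\pm(\psi))$, $E^\pm(\sim(\phi\Box\!\!\rightarrow\psi))=E^\pm(\phi)\Diamond\!\!\rightarrow(E^\pm(\sim\phi)\Diamond\!\!\rightarrow E^\pm(\sim\psi))$. *)

(* Defs.v *)
From Stdlib Require Import RelationClasses.
Set Implicit Arguments.

Inductive nform : Type :=
| NVar : nat -> nform
| NNeg : nform -> nform
| NAnd : nform -> nform -> nform
| NOr  : nform -> nform -> nform
| NImp : nform -> nform -> nform
| NBox : nform -> nform -> nform.

Inductive iform : Type :=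
| IP : nat -> iform
| IQ : nat -> iform
| IAnd : iform -> iform -> iform
| IOr  : iform -> iform -> iform
| IImp : iform -> iform -> iform
| IBox : iform -> iform -> iform
| IDia : iform -> iform -> iform.

Definition upclosed (W : Type) (le : W -> W -> Prop) (A : W -> Prop) : Prop :=
  forall w w', le w w' -> A w -> A w'.

(* R : W -> (P(W) x P(W)) -> W -> Prop,  R w (X,Y) v  means R_{(X,Y)}(w,v) *)
Definition NCM (W : Type) (le : W -> W -> Prop)
    (R : W -> (W -> Prop) * (W -> Prop) -> W -> Prop)
    (Vp Vn : nat -> W -> Prop) : Prop :=
  inhabited W /\ PreOrder le /\
  (forall n, upclosed le (Vp n)) /\ (forall n, upclosed le (Vn n)) /\
  (forall XY w w' v, le w w' -> R w XY v -> exists v', le v v' /\ R w' XY v') /\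
  (forall XY w v v', R w XY v -> le v v' -> exists w', le w w' /\ R w' XY v').

(* Verification / falsification: nsem phi = (||phi||^+, ||phi||^-) = ||phi|| *)
Fixpoint nsem (W : Type) (le : W -> W -> Prop)
    (R : W -> (W -> Prop) * (W -> Prop) -> W -> Prop)
    (Vp Vn : nat -> W -> Prop) (phi : nform) : (W -> Prop) * (W -> Prop) :=
  match phi with
  | NVar n => (Vp n, Vn n)
  | NNeg a => let A := nsem le R Vp Vn a in (snd A, fst A)
  | NAnd a b => let A := nsem le R Vp Vn a in let B := nsem le R Vp Vn b in
      (fun w => fst A w /\ fst B w, fun w => snd A w \/ snd B w)
  | NOr a b => let A := nsem le R Vp Vn a in let B := nsem le R Vp Vn b in
      (fun w => fst A w \/ fst B w, fun w => snd A w /\ snd B w)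
  | NImp a b => let A := nsem le R Vp Vn a in let B := nsem le R Vp Vn b in
      (fun w => forall v, le w v -> fst A v -> fst B v,
       fun w => fst A w /\ snd B w)
  | NBox a b => let A := nsem le R Vp Vn a in let B := nsem le R Vp Vn b in
      (fun w => forall v u, le w v -> R v A u -> fst B u,
       fun w => exists u, R w A u /\ snd B u)
  end.

Definition ECIM (W : Type) (le : W -> W -> Prop)
    (R : W -> (W -> Prop) -> W -> Prop) (V : iform -> W -> Prop) : Prop :=
  PreOrder le /\
  (forall n, upclosed le (V (IP n))) /\ (forall n, upclosed le (V (IQ n))) /\
  (forall X w w' v, le w w' -> R w X v -> exists v', le v v' /\ R w' X v') /\
  (forall X w v v', R w X v -> le v v' -> exists w', le w w' /\ R w' X v').

Fixpoint isem (W : Type) (le : W -> W -> Prop)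
    (R : W -> (W -> Prop) -> W -> Prop) (V : iform -> W -> Prop)
    (phi : iform) : W -> Prop :=
  match phi with
  | IP n => V (IP n)
  | IQ n => V (IQ n)
  | IAnd a b => fun w => isem le R V a w /\ isem le R V b w
  | IOr a b => fun w => isem le R V a w \/ isem le R V b w
  | IImp a b => fun w => forall v, le w v -> isem le R V a v -> isem le R V b v
  | IBox a b => fun w => forall v u, le w v -> R v (isem le R V a) u ->
                           isem le R V b u
  | IDia a b => fun w => exists u, R w (isem le R V a) u /\ isem le R V b u
  end.

(* Etr phi = (E^{+-}(phi), E^{+-}(~phi)); defined by structural recursion,
   unfolding the clauses of the paper (E(~~phi) = E(phi) gives the swap). *)
Fixpoint Etr (phi : nform) : iform * iform :=
  match phi with
  | NVar n => (IP n, IQ n)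
  | NNeg a => let A := Etr a in (snd A, fst A)
  | NAnd a b => let A := Etr a in let B := Etr b in
      (IAnd (fst A) (fst B), IOr (snd A) (snd B))
  | NOr a b => let A := Etr a in let B := Etr b in
      (IOr (fst A) (fst B), IAnd (snd A) (snd B))
  | NImp a b => let A := Etr a in let B := Etr b in
      (IImp (fst A) (fst B), IAnd (fst A) (snd B))
  | NBox a b => let A := Etr a in let B := Etr b in
      (IBox (fst A) (IBox (snd A) (fst B)), IDia (fst A) (IDia (snd A) (snd B)))
  end.

Definition E (phi : nform) : iform := fst (Etr phi).

Section Mi.
Variables (W : Type) (le : W -> W -> Prop)
  (R : W -> (W -> Prop) * (W -> Prop) -> W -> Prop)
  (Vp Vn : nat -> W -> Prop).

Record Rtriple : Type := mkRt {
  rt_w : W; rt_X : W -> Prop; rt_Y : W -> Prop; rt_v : W;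
  rt_R : R rt_w (rt_X, rt_Y) rt_v }.

Definition Wi : Type := (W + Rtriple)%type.

Definition lei (a b : Wi) : Prop :=
  match a, b with
  | inl w, inl w' => le w w'
  | inr t, inr t' => rt_X t = rt_X t' /\ rt_Y t = rt_Y t' /\
                     le (rt_w t) (rt_w t') /\ le (rt_v t) (rt_v t')
  | _, _ => False
  end.

(* X' \cap W, viewing W inside W^i *)
Definition capW (X' : Wi -> Prop) : W -> Prop := fun w => X' (inl w).

Definition Ri (a : Wi) (X' : Wi -> Prop) (b : Wi) : Prop :=
  exists t : Rtriple,
    (a = inl (rt_w t) /\ b = inr t /\ capW X' = rt_X t) \/
    (a = inr t /\ b = inl (rt_v t) /\ capW X' = rt_Y t).

Definition Vi (x : iform) (a : Wi) : Prop :=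
  match x, a with
  | IP n, inl w => Vp n w
  | IQ n, inl w => Vn n w
  | _, _ => False
  end.
End Mi.

(* Main.v *)
Require Import Defs.
From Stdlib Require Import RelationClasses FunctionalExtensionality PropExtensionality.

Lemma capW_ext (W : Type) (R : W -> (W -> Prop) * (W -> Prop) -> W -> Prop)
  (X : Wi R -> Prop) (A : W -> Prop) :
  (forall w, A w <-> X (inl w)) -> capW X = A.
Proof.
  intro H. apply functional_extensionality; intro w.
  apply propositional_extensionality. unfold capW. split; apply H.
Qed.

Lemma truth (W : Type) (le : W -> W -> Prop)
    (R : W -> (W -> Prop) * (W -> Prop) -> W -> Prop)
    (Vp Vn : nat -> W -> Prop) :
  PreOrder le ->
  forall phi,
  (forall w, fst (nsem le R Vp Vn phi) w <->
     isem (@lei W le R) (@Ri W R) (@Vi W R Vp Vn) (fst (Etr phi)) (inl w)) /\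
  (forall w, snd (nsem le R Vp Vn phi) w <->
     isem (@lei W le R) (@Ri W R) (@Vi W R Vp Vn) (snd (Etr phi)) (inl w)).
Proof.
  intros [Hrefl Htrans] phi.
  induction phi as [n|a IHa|a IHa b IHb|a IHa b IHb|a IHa b IHb|a IHa b IHb];
    simpl.
  - split; intro w; tauto.
  - destruct IHa as [H1 H2]. split; assumption.
  - destruct IHa as [A1 A2], IHb as [B1 B2].
    split; intro w; rewrite A1, B1 || rewrite A2, B2; tauto.
  - destruct IHa as [A1 A2], IHb as [B1 B2].
    split; intro w; rewrite A1, B1 || rewrite A2, B2; tauto.
  - destruct IHa as [A1 A2], IHb as [B1 B2].
    split; intro w.
    + split.
      * intros H x Hx Ha. destruct x as [v|t]; simpl in Hx; [|contradiction].
        apply B1, H; [exact Hx|]. apply A1, Ha.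
      * intros H v Hv Ha. apply B1, (H (inl v)); [exact Hv|]. apply A1, Ha.
    + rewrite A1, B2. tauto.
  - destruct IHa as [A1 A2], IHb as [B1 B2].
    set (sa := isem (@lei W le R) (@Ri W R) (@Vi W R Vp Vn) (fst (Etr a))).
    set (sa' := isem (@lei W le R) (@Ri W R) (@Vi W R Vp Vn) (snd (Etr a))).
    assert (EA1 : capW sa = fst (nsem le R Vp Vn a)) by (apply capW_ext; intro; apply A1).
    assert (EA2 : capW sa' = snd (nsem le R Vp Vn a)) by (apply capW_ext; intro; apply A2).
    split; intro w.
    + split.
      * intros H x y Hx Hxy c d Hc Hcd.
        destruct x as [v|t0]; simpl in Hx; [|contradiction].
        destruct Hxy as [t [[E1 [E2 E3]]|[E1 _]]]; [|discriminate].
        injection E1; intro Ev. subst y.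
        destruct c as [c|t']; simpl in Hc; [contradiction|].
        destruct Hc as [HX [HY [Hw Hv]]].
        destruct Hcd as [t2 [[E4 _]|[E4 [E5 E6]]]]; [discriminate|].
        injection E4; intro; subst t2 d.
        apply B1. apply (H (rt_w t') (rt_v t')).
        -- apply Htrans with v; [exact Hx|]. rewrite Ev. exact Hw.
        -- pose proof (rt_R t') as HR. rewrite (surjective_pairing (nsem le R Vp Vn a)). rewrite <- EA1, <- EA2. rewrite E3, E6, HX. exact HR.
      * intros H v u Hv HR. rewrite (surjective_pairing (nsem le R Vp Vn a)) in HR.
        set (t := @mkRt W R v (fst (nsem le R Vp Vn a)) (snd (nsem le R Vp Vn a)) u HR).
        apply B1. refine (H (inl v) (inr t) Hv _ (inr t) (inl u) _ _).
        -- exists t. left. simpl. auto.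
        -- simpl. auto.
        -- exists t. right. simpl. auto.
    + split.
      * intros [u [HR Hu]]. rewrite (surjective_pairing (nsem le R Vp Vn a)) in HR.
        set (t := @mkRt W R w (fst (nsem le R Vp Vn a)) (snd (nsem le R Vp Vn a)) u HR).
        exists (inr t). split.
        -- exists t. left. simpl. auto.
        -- exists (inl u). split.
           ++ exists t. right. simpl. auto.
           ++ apply B2, Hu.
      * intros [x [Hx [y [Hy Hd]]]].
        destruct Hx as [t [[E1 [E2 E3]]|[E1 _]]]; [|discriminate].
        subst x. injection E1; intro; subst w.
        destruct Hy as [t2 [[E4 _]|[E4 [E5 E6]]]]; [discriminate|].
        injection E4; intro; subst t2 y.
        exists (rt_v t). split.
        -- pose proof (rt_R t) as HR. rewrite (surjective_pairing (nsem le R Vp Vn a)). rewrite <- EA1, <- EA2, E3, E6. exact HR.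
        -- apply B2, Hd.
Qed.

Theorem lemma13 (W : Type) (le : W -> W -> Prop)
    (R : W -> (W -> Prop) * (W -> Prop) -> W -> Prop)
    (Vp Vn : nat -> W -> Prop) :
  NCM le R Vp Vn ->
  ECIM (@lei W le R) (@Ri W R) (@Vi W R Vp Vn) /\
  (forall (w : W) (phi : nform),
      fst (nsem le R Vp Vn phi) w <->
      isem (@lei W le R) (@Ri W R) (@Vi W R Vp Vn) (E phi) (inl w)).
Proof.
  intros [_ [HP [HVp [HVn [C1 C2]]]]].
  split.
  - destruct HP as [Hrefl Htrans].
    split; [|split; [|split; [|split]]].
    + split.
      * intros [w|t]; simpl; auto.
      * intros [w|t] [w'|t'] [w''|t'']; simpl; try tauto; eauto.
        intros [a1 [a2 [a3 a4]]] [b1 [b2 [b3 b4]]].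
        repeat split; try congruence; eauto.
    + intros n [w|t] [w'|t']; simpl; try tauto. apply HVp.
    + intros n [w|t] [w'|t']; simpl; try tauto. apply HVn.
    + intros X a a' b Ha [t [[E1 [E2 E3]]|[E1 [E2 E3]]]]; subst a b.
      * destruct a' as [w'|t']; simpl in Ha; [|contradiction].
        destruct (C1 _ _ _ _ Ha (rt_R t)) as [v' [Hv HR]].
        exists (inr (@mkRt W R w' (rt_X t) (rt_Y t) v' HR)). split.
        -- simpl. repeat split; auto.
        -- eexists. left. simpl. repeat split; eauto.
      * destruct a' as [w'|t']; simpl in Ha; [contradiction|].
        destruct Ha as [H1 [H2 [H3 H4]]].
        exists (inl (rt_v t')). split; [exact H4|].
        exists t'. right. repeat split. congruence.
    + intros X a b b' [t [[E1 [E2 E3]]|[E1 [E2 E3]]]] Hb; subst a b.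
      * destruct b' as [w'|t']; simpl in Hb; [contradiction|].
        destruct Hb as [H1 [H2 [H3 H4]]].
        exists (inl (rt_w t')). split; [exact H3|].
        exists t'. left. repeat split. congruence.
      * destruct b' as [v'|t']; simpl in Hb; [|contradiction].
        destruct (C2 _ _ _ _ (rt_R t) Hb) as [w' [Hw HR]].
        exists (inr (@mkRt W R w' (rt_X t) (rt_Y t) v' HR)). split.
        -- simpl. repeat split; auto.
        -- eexists. right. simpl. repeat split; eauto.
  - intros w phi. apply (@truth W le R Vp Vn HP phi).
Qed.
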